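(* Let $\lambda_0\le0\le\lambda_1$ be real and $a<b$. Then for all $t\in[a,b]$, $$\Omega^{a,b}_{\lambda_0,\lambda_1,0}(t)\le(b-a)\left|G^{a,b}_{\lambda_0,\lambda_1}(t,t)\right|,\qquad G^{a,b}_{\lambda_0,\lambda_1}(t,t):=\frac{\Phi_{(\lambda_0,\lambda_1)}(t-b)\,\Phi_{(-\lambda_0,-\lambda_1)}(t-a)}{\Phi_{(-\lambda_0,-\lambda_1)}(b-a)}.$$
   Context: For real $\lambda_0,\dots,\lambda_N$, $L_{(\lambda_0,\dots,\lambda_N)}=\prod_{j=0}^N(\frac{d}{dt}-\lambda_j)$, $E(\lambda_0,\dots,\lambda_N)=\{f\in C^{N+1}(\mathbb{R}):L_{(\lambda_0,\dots,\lambda_N)}f=0\}$, and the fundamental function $\Phi_{(\lambda_0,\dots,\lambda_N)}$ is the unique element of $E(\lambda_0,\dots,\lambda_N)$ with $\Phi^{(k)}(0)=0$ for $0\le k\le N-1$ and $\Phi^{(N)}(0)=1$ (e.g. $\Phi_{(\lambda_0,\lambda_1)}(t)=\frac{e^{\lambda_1t}-e^{\lambda_0t}}{\lambda_1-\lambda_0}$ for $\lambda_0\ne\lambda_1$). For real $\lambda_0,\lambda_1$ and $a<b$, $\Omega^{a,b}_{\lambda_0,\lambda_1,0}$ is the unique $u\in E(\lambda_0,\lambda_1,0)$ with $u(a)=u(b)=0$ and $L_{(\lambda_0,\lambda_1)}u\equiv-1$. ($G^{a,b}_{\lambda_0,\lambda_1}(t,t)$ is the diagonal of the Green function of $L_{(\lambda_0,\lambda_1)}$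 on $[a,b]$ with zero boundary conditions.) *)

(* Defs.v *)
From Stdlib Require Import Reals.
From Coquelicot Require Import Coquelicot.
Open Scope R_scope.

Definition Cn (n : nat) (f : R -> R) : Prop :=
  (forall k t, (k <= n)%nat -> ex_derive_n f k t) /\
  (forall t, continuous (Derive_n f n) t).

Definition Dm (l : R) (f : R -> R) : R -> R := fun t => Derive f t - l * f t.

Definition L2 (l0 l1 : R) (f : R -> R) : R -> R := Dm l0 (Dm l1 f).

Definition L3 (l0 l1 l2 : R) (f : R -> R) : R -> R := Dm l0 (Dm l1 (Dm l2 f)).

Definition E2 (l0 l1 : R) (f : R -> R) : Prop :=
  Cn 2 f /\ forall t, L2 l0 l1 f t = 0.

Definition E3 (l0 l1 l2 : R) (f : R -> R) : Prop :=
  Cn 3 f /\ forall t, L3 l0 l1 l2 f t = 0.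

(* phi is the fundamental function Phi_(l0,l1): the element of E(l0,l1)
   with phi(0) = 0 and phi'(0) = 1 (unique by ODE uniqueness). *)
Definition is_fundamental2 (l0 l1 : R) (phi : R -> R) : Prop :=
  E2 l0 l1 phi /\ phi 0 = 0 /\ Derive phi 0 = 1.

(* u is Omega^{a,b}_{l0,l1,0}: the element of E(l0,l1,0) with
   u(a) = u(b) = 0 and L_(l0,l1) u = -1 identically (unique). *)
Definition is_Omega (a b l0 l1 : R) (u : R -> R) : Prop :=
  E3 l0 l1 0 u /\ u a = 0 /\ u b = 0 /\ forall t, L2 l0 l1 u t = -1.

(* Main.v *)
Require Import Defs.
From Stdlib Require Import Reals Lra Psatz.
From Coquelicot Require Import Coquelicot.
Open Scope R_scope.

Lemma d_mult (f g : R -> R) (x df dg : R) : is_derive f x df -> is_derive g x dg ->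
  is_derive (fun t => f t * g t) x (df * g x + f x * dg).
Proof. intros H1 H2. apply (is_derive_mult f g x df dg H1 H2). intros; apply Rmult_comm. Qed.

Lemma d_minus (f g : R -> R) (x df dg : R) : is_derive f x df -> is_derive g x dg ->
  is_derive (fun t => f t - g t) x (df - dg).
Proof. intros H1 H2. apply (is_derive_minus f g x df dg H1 H2). Qed.

Lemma d_plus (f g : R -> R) (x df dg : R) : is_derive f x df -> is_derive g x dg ->
  is_derive (fun t => f t + g t) x (df + dg).
Proof. intros H1 H2. apply (is_derive_plus f g x df dg H1 H2). Qed.

Lemma d_val (f : R -> R) (x l l' : R) : is_derive f x l -> l = l' -> is_derive f x l'.
Proof. intros H ->; exact H. Qed.

Lemma d_shift (f : R -> R) (c x df : R) : is_derive f (x - c) df -> is_derive (fun s => f (s - c)) x df.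
Proof.
  intros H. assert (Hg : is_derive (fun s => s - c) x 1) by (auto_derive; auto; ring).
  eapply d_val. apply (is_derive_comp f (fun s => s - c) x df 1 H Hg).
  unfold scal; simpl; unfold mult; simpl; ring.
Qed.

Lemma d_expl l x : is_derive (fun t => exp (l * t)) x (l * exp (l * x)).
Proof. auto_derive. auto. ring. Qed.

Lemma mvt (f df : R -> R) x y : (forall t, is_derive f t (df t)) ->
  exists c, Rmin x y <= c <= Rmax x y /\ f y - f x = df c * (y - x).
Proof.
  intros H. apply MVT_gen. intros; apply H.
  intros t _. apply continuity_pt_filterlim. apply (ex_derive_continuous (V:=R_NormedModule) f t).
  eexists; apply H.
Qed.

Lemma strict_incr (f df : R -> R) : (forall t, is_derive f t (df t)) ->
  (forall t, 0 < df t) -> forall x y, x < y -> f x < f y.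
Proof.
  intros H Hp x y Hxy. destruct (mvt f df x y H) as [c [_ Hc]].
  specialize (Hp c). nra.
Qed.

Lemma incr (f df : R -> R) : (forall t, is_derive f t (df t)) ->
  (forall t, 0 < df t) -> forall x y, x <= y -> f x <= f y.
Proof.
  intros H Hp x y Hxy. destruct (Req_dec x y) as [->|Hn]. lra.
  left; apply (strict_incr f df H Hp); lra.
Qed.

Lemma ode_zero (y : R -> R) l x0 : (forall t, is_derive y t (l * y t)) -> y x0 = 0 ->
  forall x, y x = 0.
Proof.
  intros H H0 x.
  set (z := fun t => y t * exp (- l * t)).
  assert (Hz : forall t, is_derive z t 0).
  { intros t. eapply d_val. apply d_mult. apply H. apply d_expl. simpl. ring_simplify. reflexivity. }
  destruct (mvt z (fun _ => 0) x0 x Hz) as [c [_ Hc]].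
  unfold z in Hc. rewrite H0 in Hc.
  assert (exp (- l * x) > 0) by apply exp_pos. nra.
Qed.

Lemma L2_eq f l0 l1 t : (forall x, ex_derive f x) -> ex_derive (Derive f) t ->
  L2 l0 l1 f t = Derive (Derive f) t - (l0 + l1) * Derive f t + l0 * l1 * f t.
Proof.
  intros H1 H2. unfold L2, Dm. rewrite Derive_minus; auto.
  rewrite Derive_scal. ring.
  apply ex_derive_scal. apply H1.
Qed.

Lemma Cn2_d f n : (2 <= n)%nat -> Cn n f ->
  (forall x, ex_derive f x) /\ (forall x, ex_derive (Derive f) x).
Proof.
  intros Hn [H _]. split; intros x.
  - exact (H 1%nat x ltac:(lia)).
  - exact (H 2%nat x ltac:(lia)).
Qed.

Lemma uniq2 (g gd gdd : R -> R) l0 l1 :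
  (forall x, is_derive g x (gd x)) -> (forall x, is_derive gd x (gdd x)) ->
  (forall x, gdd x = (l0 + l1) * gd x - l0 * l1 * g x) -> g 0 = 0 -> gd 0 = 0 ->
  forall x, g x = 0.
Proof.
  intros Hg Hgd E g0 gd0.
  assert (Hh : forall x, gd x - l1 * g x = 0).
  { apply (ode_zero (fun x => gd x - l1 * g x) l0 0).
    intros x. eapply d_val. apply (d_minus gd (fun x => l1 * g x)). apply Hgd.
    apply is_derive_scal. apply Hg. rewrite E. ring.
    rewrite g0, gd0; ring. }
  apply (ode_zero g l1 0); auto.
  intros x. eapply d_val. apply Hg. specialize (Hh x). lra.
Qed.

Lemma psi_pos (psi pd pdd : R -> R) l0 l1 : l0 <= 0 -> 0 <= l1 ->
  (forall x, is_derive psi x (pd x)) -> (forall x, is_derive pd x (pdd x)) ->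
  (forall x, pdd x = - (l0 + l1) * pd x - l0 * l1 * psi x) -> psi 0 = 0 -> pd 0 = 1 ->
  forall x, 0 < pd x.
Proof.
  intros Hl0 Hl1 Hp Hpd E p0 pd0.
  assert (Hh : forall x, pd x + l1 * psi x - exp (- l0 * x) = 0).
  { apply (ode_zero (fun x => pd x + l1 * psi x - exp (- l0 * x)) (- l0) 0).
    intros x. eapply d_val. apply (d_minus (fun x => pd x + l1 * psi x) (fun x => exp (- l0 * x))).
    apply (d_plus pd (fun x => l1 * psi x)). apply Hpd. apply is_derive_scal, Hp.
    apply d_expl. rewrite E. ring.
    rewrite p0, pd0. replace (- l0 * 0) with 0 by ring. rewrite exp_0. ring. }
  assert (Hk : forall x, pd x + l0 * psi x - exp (- l1 * x) = 0).
  { apply (ode_zero (fun x => pd x + l0 * psi x - exp (- l1 * x)) (- l1) 0).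
    intros x. eapply d_val. apply (d_minus (fun x => pd x + l0 * psi x) (fun x => exp (- l1 * x))).
    apply (d_plus pd (fun x => l0 * psi x)). apply Hpd. apply is_derive_scal, Hp.
    apply d_expl. rewrite E. ring.
    rewrite p0, pd0. replace (- l1 * 0) with 0 by ring. rewrite exp_0. ring. }
  assert (Hm : forall x y, x < y -> psi x * exp (l1 * x) < psi y * exp (l1 * y)).
  { apply (strict_incr _ (fun x => exp (- l0 * x) * exp (l1 * x))).
    intros x. eapply d_val. apply (d_mult psi (fun x => exp (l1 * x))). apply Hp. apply d_expl.
    specialize (Hh x). assert (pd x = exp (- l0 * x) - l1 * psi x) by lra. rewrite H. ring.
    intros x. apply Rmult_lt_0_compat; apply exp_pos. }
  intros x. destruct (Rle_dec 0 x) as [Hx|Hx].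
  - assert (0 <= psi x).
    { destruct Hx as [Hx| <-]. 2: lra. specialize (Hm 0 x Hx). rewrite p0 in Hm.
      assert (exp (l1 * x) > 0) by apply exp_pos. nra. }
    specialize (Hk x). assert (exp (- l1 * x) > 0) by apply exp_pos. nra.
  - assert (psi x <= 0).
    { specialize (Hm x 0 ltac:(lra)). rewrite p0 in Hm.
      assert (exp (l1 * x) > 0) by apply exp_pos. nra. }
    specialize (Hh x). assert (exp (- l0 * x) > 0) by apply exp_pos. nra.
Qed.

Theorem mainTheorem6 (l0 l1 a b : R) (phi psi u : R -> R) :
  l0 <= 0 -> 0 <= l1 -> a < b ->
  is_fundamental2 l0 l1 phi ->
  is_fundamental2 (- l0) (- l1) psi ->
  is_Omega a b l0 l1 u ->
  forall t, a <= t <= b ->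
    u t <= (b - a) * Rabs (phi (t - b) * psi (t - a) / psi (b - a)).
Proof.
  intros Hl0 Hl1 Hab [[Cphi Lphi] [phi0 phid0]] [[Cpsi Lpsi] [psi0 psid0]]
    [[Cu _] [ua [ub Lu]]] t Ht.
  destruct (Cn2_d phi 2 (le_n _) Cphi) as [Ep1 Ep2].
  destruct (Cn2_d psi 2 (le_n _) Cpsi) as [Eq1 Eq2].
  destruct (Cn2_d u 3 ltac:(lia) Cu) as [Eu1 Eu2].
  set (s := l0 + l1).
  assert (Epdd : forall x, Derive (Derive phi) x = s * Derive phi x - l0 * l1 * phi x).
  { intros x. specialize (Lphi x). rewrite L2_eq in Lphi; auto. unfold s; lra. }
  assert (Eqdd : forall x, Derive (Derive psi) x = - s * Derive psi x - l0 * l1 * psi x).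
  { intros x. specialize (Lpsi x). rewrite L2_eq in Lpsi; auto. unfold s; lra. }
  assert (Eudd : forall x, Derive (Derive u) x = s * Derive u x - l0 * l1 * u x - 1).
  { intros x. specialize (Lu x). rewrite L2_eq in Lu; auto. unfold s; lra. }
  assert (Hp : forall x, is_derive phi x (Derive phi x)) by (intros; apply Derive_correct; auto).
  assert (Hpd : forall x, is_derive (Derive phi) x (Derive (Derive phi) x)) by (intros; apply Derive_correct; auto).
  assert (Hq : forall x, is_derive psi x (Derive psi x)) by (intros; apply Derive_correct; auto).
  assert (Hqd : forall x, is_derive (Derive psi) x (Derive (Derive psi) x)) by (intros; apply Derive_correct; auto).
  assert (Hu : forall x, is_derive u x (Derive u x)) by (intros; apply Derive_correct; auto).
  assert (Hud : forall x, is_derive (Derive u) x (Derive (Derive u) x)) by (intros; apply Derive_correct; auto).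
  set (pd := Derive phi) in *. set (pdd := Derive pd) in *.
  set (qd := Derive psi) in *. set (qdd := Derive qd) in *.
  set (ud := Derive u) in *. set (udd := Derive ud) in *.
  assert (Qpos : forall x, 0 < qd x).
  { apply (psi_pos psi qd qdd l0 l1); auto; intros x; rewrite Eqdd; unfold s; ring. }
  assert (Qinc : forall x y, x <= y -> psi x <= psi y) by (apply (incr psi qd); auto).
  assert (Qsinc : forall x y, x < y -> psi x < psi y) by (apply (strict_incr psi qd); auto).
  assert (Rel : forall x, phi x - exp (s * x) * psi x = 0).
  { apply (uniq2 (fun x => phi x - exp (s * x) * psi x)
      (fun x => pd x - (s * exp (s * x) * psi x + exp (s * x) * qd x))
      (fun x => pdd x - (s * (s * exp (s * x) * psi x + exp (s * x) * qd x)
                        + (s * exp (s * x) * qd x + exp (s * x) * qdd x))) l0 l1).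
    - intros x. apply (d_minus phi (fun x => exp (s * x) * psi x)). apply Hp.
      apply (d_mult (fun x => exp (s * x)) psi). apply d_expl. apply Hq.
    - intros x. apply (d_minus pd (fun x => s * exp (s * x) * psi x + exp (s * x) * qd x)). apply Hpd.
      apply (d_plus (fun x => s * exp (s * x) * psi x) (fun x => exp (s * x) * qd x)).
      + eapply d_val. apply (d_mult (fun x => s * exp (s * x)) psi).
        apply is_derive_scal, d_expl. apply Hq. ring.
      + apply (d_mult (fun x => exp (s * x)) qd). apply d_expl. apply Hqd.
    - intros x. simpl. rewrite Epdd, Eqdd. unfold s; ring.
    - simpl. rewrite phi0, psi0. ring.
    - simpl. fold pd. rewrite phid0, psid0, psi0. replace (s * 0) with 0 by ring. rewrite exp_0. ring. }
  set (Z := fun x => psi (x - a)). set (Zd := fun x => qd (x - a)).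
  set (Y := fun x => psi (x - b)). set (Yd := fun x => qd (x - b)).
  assert (HZ : forall x, is_derive Z x (Zd x)) by (intros x; apply d_shift, Hq).
  assert (HZd : forall x, is_derive Zd x (qdd (x - a))) by (intros x; apply d_shift, Hqd).
  assert (HY : forall x, is_derive Y x (Yd x)) by (intros x; apply d_shift, Hq).
  assert (HYd : forall x, is_derive Yd x (qdd (x - b))) by (intros x; apply d_shift, Hqd).
  assert (HPgen : forall (W Wd : R -> R) c, (forall x, is_derive W x (Wd x)) ->
     (forall x, is_derive Wd x (qdd (x - c))) -> (forall x, W x = psi (x - c)) ->
     (forall x, Wd x = qd (x - c)) ->
     forall x, is_derive (fun x => ud x * W x - s * u x * W x - u x * Wd x) x (- W x)).
  { intros W Wd c HW HWd EW EWd x.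
    eapply d_val. apply (d_minus (fun x => ud x * W x - s * u x * W x) (fun x => u x * Wd x)).
    apply (d_minus (fun x => ud x * W x) (fun x => s * u x * W x)).
    apply (d_mult ud W). apply Hud. apply HW.
    apply (d_mult (fun x => s * u x) W). apply is_derive_scal, Hu. apply HW.
    apply (d_mult u Wd). apply Hu. apply HWd.
    rewrite Eudd, Eqdd, EW, EWd. ring. }
  assert (HP := HPgen Z Zd a HZ HZd (fun x => eq_refl) (fun x => eq_refl)).
  assert (HQ := HPgen Y Yd b HY HYd (fun x => eq_refl) (fun x => eq_refl)).
  destruct (mvt _ _ a t HP) as [c1 [Hc1 E1]].
  destruct (mvt _ _ t b HQ) as [c2 [Hc2 E2]].
  rewrite Rmin_left, Rmax_right in Hc1 by lra.
  rewrite Rmin_left, Rmax_right in Hc2 by lra.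
  unfold Z, Zd, Y, Yd in E1, E2. rewrite ua in E1. rewrite ub in E2.
  replace (a - a) with 0 in E1 by ring. replace (b - b) with 0 in E2 by ring.
  rewrite psi0 in E1, E2.
  assert (Ic1 : psi (c1 - a) <= psi (t - a)) by (apply Qinc; lra).
  assert (Ic2 : psi (t - b) <= psi (c2 - b)) by (apply Qinc; lra).
  (* Wronskian *)
  assert (HV : forall x, is_derive (fun x => (Z x * Yd x - Y x * Zd x) * exp (s * x)) x 0).
  { intros x. eapply d_val.
    apply (d_mult (fun x => Z x * Yd x - Y x * Zd x) (fun x => exp (s * x))).
    apply (d_minus (fun x => Z x * Yd x) (fun x => Y x * Zd x)).
    apply (d_mult Z Yd). apply HZ. apply HYd. apply (d_mult Y Zd). apply HY. apply HZd.
    apply d_expl. unfold Z, Zd, Y, Yd. rewrite !Eqdd. ring. }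
  destruct (mvt _ _ t b HV) as [c3 [_ E3]].
  unfold Z, Zd, Y, Yd in E3. replace (b - b) with 0 in E3 by ring.
  rewrite psi0, psid0 in E3.
  set (Zt := psi (t - a)) in *. set (Yt := psi (t - b)) in *. set (pb := psi (b - a)) in *.
  assert (HZt : 0 <= Zt) by (unfold Zt; rewrite <- psi0; apply Qinc; lra).
  assert (HYt : Yt <= 0) by (unfold Yt; rewrite <- psi0; apply Qinc; lra).
  assert (Hpb : 0 < pb) by (unfold pb; rewrite <- psi0; apply Qsinc; lra).
  assert (Hphi : phi (t - b) = exp (s * (t - b)) * Yt) by (specialize (Rel (t - b)); fold Yt in Rel; lra).
  rewrite Hphi.
  set (Pt := ud t * Zt - s * u t * Zt - u t * qd (t - a)) in *.
  set (Qt := ud t * Yt - s * u t * Yt - u t * qd (t - b)) in *.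
  assert (HPt : Pt >= - Zt * (t - a)) by nra.
  assert (HQt : Qt >= Yt * (b - t)) by nra.
  set (V := Zt * qd (t - b) - Yt * qd (t - a)) in *.
  assert (Id : Yt * Pt - Zt * Qt = u t * V) by (unfold Pt, Qt, V; ring).
  assert (HuV : u t * V <= - (b - a) * Yt * Zt) by nra.
  assert (EV : V * exp (s * t) = pb * exp (s * b)) by lra.
  assert (Eexp : exp (s * t) = exp (s * (t - b)) * exp (s * b)).
  { rewrite <- exp_plus. f_equal. ring. }
  set (e := exp (s * (t - b))) in *. set (eb := exp (s * b)) in *.
  assert (He : 0 < e) by apply exp_pos. assert (Heb : 0 < eb) by apply exp_pos.
  assert (Hu1 : u t * pb <= - (b - a) * Yt * Zt * e).
  { assert (u t * pb * eb <= - (b - a) * Yt * Zt * e * eb).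
    { replace (u t * pb * eb) with (u t * V * e * eb) by (rewrite (Rmult_assoc (u t * V)), <- Eexp, Rmult_assoc, EV; ring).
      apply Rmult_le_compat_r. lra. apply Rmult_le_compat_r; lra. }
    nra. }
  apply Rle_trans with ((b - a) * - (e * Yt * Zt / pb)).
  - assert (u t <= - (b - a) * Yt * Zt * e / pb).
    { apply Rmult_le_reg_r with pb. lra. unfold Rdiv. rewrite Rmult_assoc, Rinv_l by lra. lra. }
    unfold Rdiv in *. lra.
  - apply Rmult_le_compat_l. lra. rewrite <- Rabs_Ropp. apply Rle_abs.
Qed.
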